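(* Let $\mathcal{D}=\{(\mathbf{p}_n,\mathbf{q}_n)\}_{n=1}^N$ be data with $\mathbf{p}_n\in\mathbb{R}_{++}^K$, $\mathbf{q}_n\in\mathbb{R}_+^K$, whose associated graph $G$ satisfies the Cycle Edge Weight Equality Condition (CEWEC), and let $\mathcal{D}'$ consist of $\mathcal{D}$ together with at least one additional observation $(\mathbf{p},\mathbf{q})\in\mathbb{R}_{++}^K\times\mathbb{R}_+^K$, with associated graph $G'$. If $G'$ also satisfies the CEWEC, then for every price vector $\mathbf{p}\in\mathbb{R}_{++}^K$ and every vertex $\upsilon$ of $G$, $$M^-_{G'}(\mathbf{p},\upsilon)\ge M^-_G(\mathbf{p},\upsilon)\quad\text{and}\quad M^+_{G'}(\mathbf{p},\upsilon)\le M^+_G(\mathbf{p},\upsilon).$$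
   Context: For a dataset $\{(\mathbf{p}_n,\mathbf{q}_n)\}$, its associated graph $H$ is the weighted directed graph with one vertex $\upsilon_n$ per observation, an edge from $\upsilon_m$ to $\upsilon_n$ for each $m\ne n$, with weight $w(\upsilon_m,\upsilon_n)=\frac{\mathbf{p}_m\cdot\mathbf{q}_n}{\mathbf{p}_m\cdot\mathbf{q}_m}$. $H$ satisfies the CEWEC if for every cycle in $H$ all of whose edge weights are $\le 1$, all of its edge weights equal $1$. A walk $\upsilon_{a_0},\dots,\upsilon_{a_k}$ ($k\ge0$) in $H$ is an RP-walk if every edge weight along it is $\le 1$; write $uRv$ if there is an RP-walk from $u$ to $v$ in $H$. Set $\operatorname{VRP}_H(\upsilon)=\{l:\upsilon_l R\,\upsilon\}$ and $\operatorname{VRW}_H(\upsilon)=\{l:\upsilon R\,\upsilon_l\}$, and define $M^-_H(\mathbf{p},\upsilon)=\inf_{\mathbf{q}\in\mathbb{R}_+^K}\{\mathbf{p}\cdot\mathbf{q}:\mathbf{p}_l\cdot\mathbf{q}\ge\mathbf{p}_l\cdot\mathbf{q}_l \text{ for all } l\in\operatorname{VRW}_H(\upsilon)\}$ and $M^+_H(\mathbf{p},\upsilon)=\min\{\mathbf{p}\cdot\mathbf{q}_l: l\in\operatorname{VRP}_H(\upsilon)\}$. *)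

(* Defs.v *)
From HB Require Import structures.
From mathcomp Require Import all_boot all_order all_algebra.
From mathcomp Require Import boolp classical_sets reals.
Set Implicit Arguments. Unset Strict Implicit. Unset Printing Implicit Defensive.
Import Order.TTheory GRing.Theory Num.Theory.
Local Open Scope ring_scope.
Local Open Scope classical_set_scope.

Section RPGraph.
Variables (R : realType) (K : nat) (I : finType).
Variables (P Q : I -> 'I_K -> R).

Definition dot (x y : 'I_K -> R) : R := \sum_(k < K) x k * y k.

Definition weight (m n : I) : R := dot (P m) (Q n) / dot (P m) (Q m).

Definition rp_edge : rel I := fun m n => (m != n) && (weight m n <= 1).

Definition CEWEC : Prop :=
  forall s : seq I, uniq s -> (2 <= size s)%N ->
    cycle rp_edge s -> cycle (fun m n => weight m n == 1) s.

Definition RPrel (u v : I) : Prop :=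
  exists s : seq I, path rp_edge u s /\ last u s = v.

Definition VRP (v : I) : set I := [set l | RPrel l v].
Definition VRW (v : I) : set I := [set l | RPrel v l].

Definition Mminus (p : 'I_K -> R) (v : I) : R :=
  inf [set dot p q | q in [set q : 'I_K -> R |
         (forall k, 0 <= q k) /\
         (forall l, VRW v l -> dot (P l) (Q l) <= dot (P l) q)]].

(* minimum over the finite nonempty set VRP v (inf of a finite set) *)
Definition Mplus (p : 'I_K -> R) (v : I) : R :=
  inf [set dot p (Q l) | l in VRP v].

End RPGraph.

(* Main.v *)
Require Import Defs.
From HB Require Import structures.
From mathcomp Require Import all_boot all_order all_algebra.
From mathcomp Require Import boolp classical_sets reals.
Import Order.TTheory GRing.Theory Num.Theory.
Local Open Scope ring_scope.

Lemma inf_mono (R : realType) (A B : set R) :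
  (forall x, A x -> B x) -> (exists a, A a) -> (forall b, B b -> 0 <= b) ->
  inf B <= inf A.
Proof.
move=> AB [a Aa] B0.
apply: lb_le_inf; first by exists a.
move=> y Ay.
have hB : has_lbound B by exists 0 => z Bz; exact: B0.
exact: (ge_inf hB (AB _ Ay)).
Qed.

Lemma dot_ge0 (R : realType) K (x y : 'I_K -> R) :
  (forall k, 0 <= x k) -> (forall k, 0 <= y k) -> 0 <= dot x y.
Proof. by move=> hx hy; rewrite /dot; apply: sumr_ge0 => k _; apply: mulr_ge0. Qed.

Theorem fact1 (R : realType) (K N N' : nat)
  (P Q : 'I_N -> 'I_K -> R) (P' Q' : 'I_N' -> 'I_K -> R) :
  (forall n k, 0 < P n k) -> (forall n k, 0 <= Q n k) ->
  (forall n k, 0 < P' n k) -> (forall n k, 0 <= Q' n k) ->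
  (N < N')%N ->
  (forall (i : 'I_N) (j : 'I_N'), val i = val j -> P' j = P i /\ Q' j = Q i) ->
  CEWEC P Q -> CEWEC P' Q' ->
  forall p : 'I_K -> R, (forall k, 0 < p k) ->
  forall (i : 'I_N) (j : 'I_N'), val i = val j ->
    Mminus P Q p i <= Mminus P' Q' p j /\ Mplus P' Q' p j <= Mplus P Q p i.
Proof.
move=> HP HQ HP' HQ' HN Hsame _ _ p Hp i j Hij.
have leN : (N <= N')%N by apply: ltnW.
pose f (m : 'I_N) : 'I_N' := widen_ord leN m.
have fP m : P' (f m) = P m by case: (Hsame m (f m) erefl).
have fQ m : Q' (f m) = Q m by case: (Hsame m (f m) erefl).
have fj : f i = j by apply: val_inj.
have fedge : forall m n, rp_edge P' Q' (f m) (f n) = rp_edge P Q m n.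
  move=> m n; rewrite /rp_edge /weight !fP !fQ.
  have -> : (f m == f n) = (m == n).
    by apply/eqP/eqP => [/(congr1 val) H|->] //; apply: val_inj.
  by [].
have walk : forall u v, RPrel P Q u v -> RPrel P' Q' (f u) (f v).
  move=> u v [s [ps ls]]; exists (map f s); split.
    by rewrite path_map; rewrite (eq_path (e' := rp_edge P Q)) // => a b /=; rewrite fedge.
  by rewrite last_map ls.
have hp0 : forall k, 0 <= p k by move=> k; apply: ltW.
split.
- apply: inf_mono.
  + move=> x [q [q0 hq] <-]; exists q => //; split => // l hl.
    have := hq (f l); rewrite fP fQ; apply; rewrite /VRW /= -fj; exact: walk.
  + exists (dot p (fun k => \sum_m Q' m k)); exists (fun k => \sum_m Q' m k) => //.
    split; first by move=> k; apply: sumr_ge0 => m _.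
    move=> l _; rewrite /dot; apply: ler_sum => k _; apply: ler_wpM2l; first exact: ltW.
    by rewrite (bigD1 l) //= lerDl; apply: sumr_ge0.
  + by move=> b [q [q0 _] <-]; apply: dot_ge0.
- apply: inf_mono.
  + move=> x [l hl <-]; exists (f l); first by rewrite /VRP /= -fj; apply: walk.
    by rewrite fQ.
  + by exists (dot p (Q i)); exists i => //; exists [::].
  + by move=> b [l _ <-]; apply: dot_ge0.
Qed.
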